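(* Let $\phi:R\to S$ be a homomorphism of differential rings (rings equipped with the same $m$ commuting derivations $\Delta=\{\delta_1,\dots,\delta_m\}$, and $\phi$ commuting with each $\delta_j$). Suppose $\Lambda$ is a coherent subset of $R\{x\}$, and let $\Lambda^\phi:=\{f^\phi:f\in\Lambda\}\subseteq S\{x\}$, where $f^\phi$ is obtained from $f$ by applying $\phi$ to its coefficients. If $H_\Lambda^\phi\neq 0$, then $H_{\Lambda^\phi}=H_\Lambda^\phi$ and $\Lambda^\phi$ is coherent.
   Context: All rings are commutative and unital. For a ring $R$ with commuting derivations $\Delta=\{\delta_1,\dots,\delta_m\}$ and $x=(x_1,\dots,x_n)$, $R\{x\}$ is the ring of differential polynomials, i.e. the polynomial ring $R[\Theta x]$ in the algebraic indeterminates $\Theta x=\{\theta x_i\}$, where $\Theta$ is the free commutative monoid generated by $\Delta$. The indeterminates are ranked by: $\delta_m^{e_m}\cdots\delta_1^{e_1}x_i<\delta_m^{r_m}\cdots\delta_1^{r_1}x_j$ iff $(\sum e_k,i,e_m,\dots,e_1)<(\sum r_k,j,r_m,\dots,r_1)$ lexicographically. For $f\in R\{x\}\setminus R$: the leader $v_f$ is the highest-ranked indeterminate appearing in $f$; the degree $d_f$ is the degree of $v_f$ in $f$; the separant $S_f=\partial f/\partial v_f$; the initial $I_f$ is the leading coefficient of $f$ as a polynomial in $v_f$. For finite $\Lambda$, $H_\Lambda:=\prod_{f\in\Lambda}I_fS_f$. A subset $\Lambda\subset R\{x\}\setminus R$ is coherent if (1) (autoreduced) for all $f\neq g$ in $\Lambda$,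 no proper derivative $\theta v_f$ ($\theta\neq 1$) of $v_f$ appears in $g$, and if $v_f$ appears in $g$ it does so with degree $<d_f$; and (2) whenever $f\neq g$ in $\Lambda$ and $\theta_f,\theta_g\in\Theta$ satisfy $\theta_fv_f=\theta_gv_g=:v$ with $v$ the least indeterminate for which this happens for $f,g$, there is $N$ with $H_\Lambda^N(S_g\theta_ff-S_f\theta_gg)\in(\Lambda)_v$, where $(\Lambda)_v$ is the (algebraic) ideal generated by $\{\theta f: f\in\Lambda,\theta\in\Theta, v_{\theta f}<v\}$. The map $\phi$ is extended to $R\{x\}\to S\{x\}$ coefficientwise, giving $H_\Lambda^\phi$. *)

(* Defs.v *)
From HB Require Import structures.
From mathcomp Require Import all_boot all_order all_algebra.
From mathcomp Require Import finmap.
From mathcomp Require Import monalg.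

Set Implicit Arguments.
Unset Strict Implicit.
Unset Printing Implicit Defensive.

Import GRing.Theory.
Local Open Scope fset_scope.
Local Open Scope ring_scope.

(* delta_1, ..., delta_m, indexed here by 'I_m (delta_{k+1} = d k).      *)

Definition is_derivation (R : comNzRingType) (D : R -> R) : Prop :=
  (forall a b : R, D (a + b) = D a + D b) /\
  (forall a b : R, D (a * b) = a * D b + D a * b).

Definition diff_ring_str (m : nat) (R : comNzRingType) (d : 'I_m -> R -> R)
  : Prop :=
  (forall k, is_derivation (d k)) /\
  (forall j k (a : R), d j (d k a) = d k (d j a)).

Section DiffPoly.
Variables (n m : nat).

(* Theta = free commutative monoid on Delta, encoded by exponent vectors:
   th : {ffun 'I_m -> nat} stands for delta_m^(th m-1) ... delta_1^(th 0). *)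
Definition Theta := {ffun 'I_m -> nat}.
Definition theta1 : Theta := [ffun => 0%N].

(* The algebraic indeterminates Theta x: (i, e) stands for theta_e x_(i+1). *)
Definition dvar := ('I_n * Theta)%type.

Definition theta_var (th : Theta) (v : dvar) : dvar :=
  (v.1, [ffun k => (th k + v.2 k)%N]).

Definition delta_var (k : 'I_m) (v : dvar) : dvar :=
  theta_var [ffun j => nat_of_bool (j == k)] v.

(* The ranking: delta_m^e_m...delta_1^e_1 x_i < delta_m^r_m...delta_1^r_1 x_j
   iff (sum e, i, e_m, ..., e_1) < (sum r, j, r_m, ..., r_1) lexicographically. *)
Fixpoint lex_lt (s t : seq nat) : bool :=
  match s, t with
  | x :: s', y :: t' => (x < y)%N || ((x == y) && lex_lt s' t')
  | _, _ => false
  end.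

Definition rank_key (v : dvar) : seq nat :=
  [:: (\sum_k v.2 k)%N, val v.1 & rev [seq v.2 k | k <- enum 'I_m]].

Definition rank_lt (v w : dvar) : bool := lex_lt (rank_key v) (rank_key w).

Definition dmonom := {cmonom dvar}.

Section Ring.
Variable R : comNzRingType.

Definition dpoly := {malg R[dmonom]}.

Implicit Types (p f g : dpoly) (v w : dvar).

Definition appears v p : bool := has (fun M : dmonom => M v != 0%N) (enum_fset (msupp p)).

Definition vars p : seq dvar :=
  undup (flatten [seq enum_fset (finsupp (cmonom_val M)) | M : dmonom <- enum_fset (msupp p)]).

(* leader: the highest ranked indeterminate appearing in p (None iff p in R) *)
Definition rank_max v w : dvar := if rank_lt v w then w else v.
Definition leader p : option dvar :=
  foldr (fun v o => Some (if o is Some w then rank_max v w else v)) None (vars p).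

Definition degv v p : nat := (\max_(M <- msupp p) M v)%N.

Definition pderiv v p : dpoly :=
  \sum_(M <- msupp p) << p@_M * (M v)%:R *g divcm M (ucm v) >>.

Definition coef_in v (k : nat) p : dpoly :=
  \sum_(M <- msupp p | M v == k) << p@_M *g divcm M (expcmn (ucm v) k) >>.

Definition separant p : dpoly :=
  if leader p is Some v then pderiv v p else 0.
Definition initial p : dpoly :=
  if leader p is Some v then coef_in v (degv v p) p else 0.

Definition H_of (L : {fset dpoly}) : dpoly :=
  \prod_(f <- enum_fset L) (initial f * separant f).

Definition in_ideal (P : dpoly -> Prop) (q : dpoly) : Prop :=
  exists r : seq (dpoly * dpoly),
    (forall pr, pr \in r -> P pr.2) /\ q = \sum_(pr <- r) pr.1 * pr.2.

Section Deriv.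
Variable d : 'I_m -> R -> R.

(* extension of the derivation d k to R{x}: d k (theta x_i) = d k theta x_i *)
Definition dmon (k : 'I_m) (M : dmonom) : dpoly :=
  \sum_(v <- enum_fset (finsupp (cmonom_val M)))
     << (M v)%:R *g divcm M (ucm v) >> * << (1 : R) *g ucm (delta_var k v) >>.

Definition dext (k : 'I_m) p : dpoly :=
  \sum_(M <- msupp p) (<< d k (p@_M) *g M >> + p@_M *: dmon k M).

Definition theta (th : Theta) p : dpoly :=
  foldr (fun k q => iter (th k) (dext k) q) p (enum 'I_m).

Definition Lambda_lt (L : {fset dpoly}) v (q : dpoly) : Prop :=
  exists f th, [/\ f \in L, q = theta th f &
    exists w, leader (theta th f) = Some w /\ rank_lt w v].

Definition coherent (L : {fset dpoly}) : Prop :=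
  [/\ (* L is a subset of R{x} \ R *)
      (forall f, f \in L -> leader f != None),
      (* (1) autoreduced *)
      (forall f g vf, f \in L -> g \in L -> f != g -> leader f = Some vf ->
         (forall th, th != theta1 -> ~~ appears (theta_var th vf) g) /\
         (appears vf g -> (degv vf g < degv vf f)%N))
    & (* (2) coherence of the least common derivatives *)
      (forall f g vf vg thf thg, f \in L -> g \in L -> f != g ->
         leader f = Some vf -> leader g = Some vg ->
         theta_var thf vf = theta_var thg vg ->
         (forall thf' thg', theta_var thf' vf = theta_var thg' vg ->
            ~~ rank_lt (theta_var thf' vf) (theta_var thf vf)) ->
         exists N : nat,
           in_ideal (Lambda_lt L (theta_var thf vf))
             (H_of L ^+ N * (separant g * theta thf f - separant f * theta thg g)))].
End Deriv.
End Ring.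

Definition map_dpoly (R S : comNzRingType) (phi : R -> S) (p : dpoly R) : dpoly S :=
  \sum_(M <- msupp p) << phi (p@_M) *g M >>.

End DiffPoly.

(* Main.v *)
Require Import Defs.
From HB Require Import structures.
From mathcomp Require Import all_boot all_order all_algebra.
From mathcomp Require Import finmap.
From mathcomp Require Import monalg.
Local Open Scope fset_scope.
Local Open Scope ring_scope.

Set Implicit Arguments.
Unset Strict Implicit.
Unset Printing Implicit Defensive.
Import GRing.Theory.



Lemma lex_irr s : lex_lt s s = false.
Proof. by elim: s => //= x s ->; rewrite ltnn eqxx. Qed.

Lemma lex_trans s t u : lex_lt s t -> lex_lt t u -> lex_lt s u.
Proof.
elim: s t u => [|x s IH] [|y t] [|z u] //=.
case/orP=> [xy|/andP[/eqP-> st]]; case/orP=> [yz|/andP[/eqP<- tu]].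
- by rewrite (ltn_trans xy yz).
- by rewrite xy.
- by rewrite yz.
- by rewrite eqxx (IH _ _ st tu) orbT.
Qed.

Lemma lex_total s t : size s = size t -> s != t -> lex_lt s t || lex_lt t s.
Proof.
elim: s t => [|x s IH] [|y t] //= [/eqP Hs] Hne.
case: (ltngtP x y) => //= Hxy.
subst y; rewrite ?eqxx /=; apply: IH; first exact/eqP.
by apply: contra Hne => /eqP ->.
Qed.

Section Rank.
Variables n m : nat.
Implicit Types u v w : dvar n m.

Definition ord v := (\sum_k v.2 k)%N.

Lemma rank_irr v : rank_lt v v = false.
Proof. exact: lex_irr. Qed.

Lemma rank_trans u v w : rank_lt u v -> rank_lt v w -> rank_lt u w.
Proof. exact: lex_trans. Qed.

Lemma rank_key_inj : injective (@rank_key n m).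
Proof.
move=> [a1 b1] [a2 b2] [_ /val_inj e1 /(congr1 rev)]; rewrite !revK => e2.
subst a2; congr (_, _); apply/ffunP => k.
by move/eq_in_map: e2 => /(_ k); apply; rewrite mem_enum.
Qed.

Lemma rank_total v w : v != w -> rank_lt v w || rank_lt w v.
Proof.
move=> vw; apply: lex_total; first by rewrite /rank_key /= !size_rev !size_map.
by apply: contra vw => /eqP /rank_key_inj ->.
Qed.

Lemma rank_ord v w : rank_lt v w -> (ord v <= ord w)%N.
Proof. by rewrite /rank_lt /rank_key /ord /= => /orP[/ltnW|/andP[/eqP -> _]]. Qed.

Definition rle u v := (u == v) || rank_lt u v.

Lemma rle_trans u v w : rle u v -> rle v w -> rle u w.
Proof.
rewrite /rle => /orP[/eqP->//|uv] /orP[/eqP<-|vw]; first by rewrite uv orbT.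
by rewrite (rank_trans uv vw) orbT.
Qed.

Lemma rle_anti u v : rle u v -> rle v u -> u = v.
Proof.
rewrite /rle => /orP[/eqP//|uv] /orP[/eqP//|vu].
by have := rank_trans uv vu; rewrite rank_irr.
Qed.

Lemma rle_ord u v : rle u v -> (ord u <= ord v)%N.
Proof. by case/orP=> [/eqP->//|/rank_ord]. Qed.

Definition lfold (s : seq (dvar n m)) :=
  foldr (fun v o => Some (if o is Some w then rank_max v w else v)) None s.

Lemma lfold_spec s w : lfold s = Some w -> w \in s /\ (forall u, u \in s -> rle u w).
Proof.
elim: s w => [|v s IH] w //=.
case E: (lfold s) => [w'|] [<-].
  have [w's H] := IH _ E.
  rewrite /rank_max; case: ifP => vw'.
    split; first by rewrite inE w's orbT.
    by move=> u; rewrite inE => /orP[/eqP->|/H//]; rewrite /rle vw' orbT.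
  have Hw: rle w' v.
    case: (v =P w') => [->|/eqP ne]; first by rewrite /rle eqxx.
    by move: (rank_total ne); rewrite vw' /= /rle => ->; rewrite orbT.
  split; first by rewrite inE eqxx.
  by move=> u; rewrite inE => /orP[/eqP->|/H uw]; [rewrite /rle eqxx|exact: rle_trans Hw].
case: s IH E => // _ _; split; first by rewrite inE eqxx.
by move=> u; rewrite inE => /eqP->; rewrite /rle eqxx.
Qed.

Lemma lfold_None s : lfold s = None -> s = [::].
Proof. by case: s. Qed.

Lemma lfold_max s w : w \in s -> (forall u, u \in s -> rle u w) -> lfold s = Some w.
Proof.
move=> ws H; case E: (lfold s) => [w'|]; last by move: ws; rewrite (lfold_None E).
have [w1 H1] := lfold_spec E; congr Some; exact: rle_anti (H _ w1) (H1 _ ws).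
Qed.

End Rank.



Section SumF.
Context (K : choiceType) (G T : zmodType) (F : K -> G -> T).
Definition sF (p : {malg G[K]}) := \sum_(k <- msupp p) F k p@_k.
Hypothesis F0 : forall k, F k 0 = 0.
Lemma sFw (d : {fset K}) (p : {malg G[K]}) : msupp p `<=` d ->
  sF p = \sum_(k <- d) F k p@_k.
Proof. by move=> le; apply: big_fset_incl => // x _ /mcoeff_outdom ->. Qed.
Lemma sFU c k0 : sF << c *g k0 >> = F k0 c.
Proof. by rewrite (sFw msuppU_le) big_seq_fset1 mcoeffUU. Qed.
Lemma sF0 : sF 0 = 0.
Proof. by rewrite /sF msupp0 big_seq_fset0. Qed.
Hypothesis FD : forall k, {morph F k : x y / x + y}.
Lemma sFD p q : sF (p + q) = sF p + sF q.
Proof.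
rewrite (@sFw (msupp p `|` msupp q)) ?msuppD_le //.
rewrite (@sFw (msupp p `|` msupp q) p) ?fsubsetUl //.
rewrite (@sFw (msupp p `|` msupp q) q) ?fsubsetUr //.
by rewrite -big_split; apply: eq_bigr => k _; rewrite mcoeffD FD.
Qed.
Lemma sF_sum (I : Type) (r : seq I) (P : pred I) (E : I -> {malg G[K]}) :
  sF (\sum_(i <- r | P i) E i) = \sum_(i <- r | P i) sF (E i).
Proof. exact: (big_morph sF sFD sF0). Qed.
End SumF.

Section Poly.
Variables (n m : nat) (R : comNzRingType).
Implicit Types (p q f g : dpoly n m R) (u v w : dvar n m).

Lemma appearsP u p : reflect (exists2 M, M \in msupp p & M u != 0%N) (appears u p).
Proof. exact: hasP. Qed.

Lemma mem_vars u p : (u \in vars p) = appears u p.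
Proof.
rewrite /vars mem_undup; apply/flatten_mapP/appearsP => -[M HM Hu]; exists M => //.
  by rewrite cmE_neq0.
by rewrite -cmE_neq0.
Qed.

Lemma leaderP p w : leader p = Some w ->
  appears w p /\ forall u, appears u p -> rle u w.
Proof.
move=> /lfold_spec [H1 H2]; rewrite -mem_vars; split => // u.
by rewrite -mem_vars; apply: H2.
Qed.

Lemma leader_max p w : appears w p -> (forall u, appears u p -> rle u w) ->
  leader p = Some w.
Proof.
by move=> H1 H2; apply: lfold_max; rewrite ?mem_vars // => u; rewrite mem_vars; apply: H2.
Qed.

Lemma leader_None p u : leader p = None -> ~~ appears u p.
Proof. by move/lfold_None => E; rewrite -mem_vars /leader E. Qed.

Lemma appears_sub u p q : msupp p `<=` msupp q -> appears u p -> appears u q.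
Proof.
move=> /fsubsetP le /appearsP [M HM Hu]; apply/appearsP; exists M => //; exact: le.
Qed.


End Poly.

Section Map.
Variables (n m : nat) (R S : comNzRingType) (phi : {rmorphism R -> S}).
Local Notation mp := (@map_dpoly n m R S phi).
Implicit Types (p q : dpoly n m R).

Lemma mpE p : mp p = sF (fun M c => << phi c *g M >>) p.
Proof. by []. Qed.

Lemma mp0 : mp 0 = 0.
Proof. by rewrite mpE sF0. Qed.

Lemma mpD p q : mp (p + q) = mp p + mp q.
Proof.
by rewrite !mpE sFD // => [k|k x y]; rewrite ?rmorph0 ?monalgU0 // rmorphD monalgUD.
Qed.

Lemma mpU c M : mp << c *g M >> = << phi c *g M >>.
Proof. by rewrite mpE sFU // => k; rewrite rmorph0 monalgU0. Qed.

Lemma mp_sum (I : Type) (r : seq I) (P : pred I) (E : I -> dpoly n m R) :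
  mp (\sum_(i <- r | P i) E i) = \sum_(i <- r | P i) mp (E i).
Proof. exact: (big_morph mp mpD mp0). Qed.

Lemma mcoeff_mp p M : (mp p)@_M = phi p@_M.
Proof.
rewrite {2}(monalgE p) {1}(monalgE p) mp_sum raddf_sum /= raddf_sum rmorph_sum /=.
by apply: eq_bigr => k _; rewrite mpU !mcoeffU rmorphMn.
Qed.

Lemma msupp_mp p : msupp (mp p) `<=` msupp p.
Proof.
apply/fsubsetP => k; rewrite -!mcoeff_neq0 mcoeff_mp.
by apply: contra => /eqP ->; rewrite rmorph0.
Qed.

Lemma mpM p q : mp (p * q) = mp p * mp q.
Proof.
apply/malgP => k; rewrite mcoeff_mp mcoeffMl (mcoeffMlw _ (msupp_mp p) (msupp_mp q)).
rewrite rmorph_sum; apply: eq_bigr => k1 _; rewrite rmorph_sum; apply: eq_bigr => k2 _.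
by rewrite rmorphMn rmorphM !mcoeff_mp.
Qed.

Lemma mp1 : mp 1 = 1.
Proof. by rewrite -mpolyC1E mpU rmorph1 mpolyC1E. Qed.

Lemma mpN p : mp (- p) = - mp p.
Proof. by apply/eqP; rewrite -subr_eq0 opprK -mpD addNr mp0. Qed.
Lemma mpB p q : mp (p - q) = mp p - mp q.
Proof. by rewrite mpD mpN. Qed.
Lemma mp_prod (I : Type) (r : seq I) (P : pred I) (E : I -> dpoly n m R) :
  mp (\prod_(i <- r | P i) E i) = \prod_(i <- r | P i) mp (E i).
Proof. exact: (big_morph mp mpM mp1). Qed.
Lemma mpX p k : mp (p ^+ k) = mp p ^+ k.
Proof. by elim: k => [|k IH]; rewrite ?expr0 ?mp1 // !exprS mpM IH. Qed.
Lemma mpC c : mp c%:MP = (phi c)%:MP.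
Proof. exact: mpU. Qed.
Lemma mpZ c p : mp (c *: p) = phi c *: mp p.
Proof. by rewrite -!mul_malgC mpM mpC. Qed.
Lemma mp_nat k : mp k%:R = k%:R.
Proof. by rewrite -mpolyC_nat mpC rmorph_nat mpolyC_nat. Qed.
End Map.



Section PD.
Variables (n m : nat) (R : comNzRingType).
Implicit Types (p q f g : dpoly n m R) (u v w : dvar n m).

Definition pdF u (M : dmonom n m) (c : R) : dpoly n m R :=
  << c * (M u)%:R *g divcm M (ucm u) >>.

Lemma pdF0 u M : pdF u M 0 = 0.
Proof. by rewrite /pdF mul0r monalgU0. Qed.
Lemma pdFD u M : {morph pdF u M : x y / x + y}.
Proof. by move=> x y; rewrite /pdF mulrDl monalgUD. Qed.

Lemma pderivE u p : pderiv u p = sF (pdF u) p.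
Proof. by []. Qed.

Lemma pderivD u p q : pderiv u (p + q) = pderiv u p + pderiv u q.
Proof. by rewrite !pderivE sFD //; [apply: pdF0|apply: pdFD]. Qed.
Lemma pderiv0 u : pderiv u (0 : dpoly n m R) = 0.
Proof. by rewrite pderivE sF0. Qed.
Lemma pderiv_sum u (I : Type) (r : seq I) (P : pred I) (E : I -> dpoly n m R) :
  pderiv u (\sum_(i <- r | P i) E i) = \sum_(i <- r | P i) pderiv u (E i).
Proof. exact: (big_morph _ (pderivD u) (pderiv0 u)). Qed.
Lemma pderivU u c M : pderiv u << c *g M >> = pdF u M c.
Proof. by rewrite pderivE sFU //; apply: pdF0. Qed.

Lemma pderiv_appears u p : pderiv u p != 0 -> appears u p.
Proof.
apply: contraR => /appearsP H; rewrite pderivE /sF big1_seq // => M /andP[_ HM].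
rewrite /pdF; case Hu: (M u) => [|k]; first by rewrite mulr0 monalgU0.
by case: H; exists M => //; rewrite Hu.
Qed.

Definition ciF v k (M : dmonom n m) (c : R) : dpoly n m R :=
  if M v == k then << c *g divcm M (expcmn (ucm v) k) >> else 0.

Lemma ciF0 v k M : ciF v k M 0 = 0.
Proof. by rewrite /ciF monalgU0; case: ifP. Qed.

Lemma coef_inE v k p : coef_in v k p = sF (ciF v k) p.
Proof. by rewrite /coef_in big_mkcond. Qed.

Lemma coef_in_neq0 v k p : coef_in v k p != 0 ->
  exists2 M, M \in msupp p & M v = k.
Proof.
move=> Hc; have : ~~ all (fun M : dmonom n m => M v != k) (enum_fset (msupp p)).
  apply: contra Hc => /allP H; rewrite coef_inE /sF big1_seq // => M /andP[_ HM].
  by rewrite /ciF (negbTE (H M HM)).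
by case/allPn => M HM /negPn /eqP E; exists M.
Qed.

End PD.

Section MapComm.
Variables (n m : nat) (R S : comNzRingType) (phi : {rmorphism R -> S}).
Local Notation mp := (@map_dpoly n m R S phi).
Implicit Types (p q f g : dpoly n m R) (u v w : dvar n m).

Lemma mp_sF (FR : dmonom n m -> R -> dpoly n m R) (FS : dmonom n m -> S -> dpoly n m S) p :
  (forall M, FS M 0 = 0) -> (forall M c, mp (FR M c) = FS M (phi c)) ->
  mp (sF FR p) = sF FS (mp p).
Proof.
move=> FS0 H; rewrite (sFw FS0 (msupp_mp phi p)) /sF mp_sum.
by apply: eq_bigr => M _; rewrite H mcoeff_mp.
Qed.

Lemma mp_pderiv u p : mp (pderiv u p) = pderiv u (mp p).
Proof.
rewrite !pderivE; apply: mp_sF => [M|M c]; first exact: pdF0.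
by rewrite /pdF mpU rmorphM rmorph_nat.
Qed.

Lemma mp_coef_in v k p : mp (coef_in v k p) = coef_in v k (mp p).
Proof.
rewrite !coef_inE; apply: mp_sF => [M|M c]; first exact: ciF0.
by rewrite /ciF; case: ifP; rewrite ?mp0 ?mpU.
Qed.

Lemma appears_mp u p : appears u (mp p) -> appears u p.
Proof.
move=> /appearsP [M HM Hu]; apply/appearsP; exists M.
  exact: (fsubsetP (msupp_mp phi p) _ HM).
by move: Hu; case: (M u).
Qed.

Lemma degv_mp_le v p : (degv v (mp p) <= degv v p)%N.
Proof.
apply/bigmax_leqP_seq => M HM _; apply: leq_bigmax_seq => //.
exact: (fsubsetP (msupp_mp phi p)).
Qed.

Lemma lead_mp f v : leader f = Some v -> mp (initial f) != 0 -> mp (separant f) != 0 ->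
  [/\ leader (mp f) = Some v, degv v (mp f) = degv v f,
      initial (mp f) = mp (initial f) & separant (mp f) = mp (separant f)].
Proof.
rewrite /initial /separant => lf; rewrite lf => HI HS.

have lf' : leader (mp f) = Some v.
  have [_ H] := leaderP lf.
  
  apply: leader_max; first by apply: pderiv_appears; rewrite -mp_pderiv.
  
  by move=> u /appears_mp /H.

have dg : degv v (mp f) = degv v f.
  apply/eqP; rewrite eqn_leq degv_mp_le /=.
  
  move: HI; rewrite mp_coef_in => /coef_in_neq0 [M HM E].
  rewrite -E. apply: (leq_bigmax_seq _ HM). by []. 
rewrite lf' dg; split; [reflexivity|reflexivity| |].
  exact: (esym (mp_coef_in v (degv v f) f)).
exact: (esym (mp_pderiv v f)).
Qed.
End MapComm.



Lemma kscaleU (K : choiceType) (T : comNzRingType) (c a : T) (M : K) :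
  c *: << a *g M >> = << c * a *g M >> :> {malg T[K]}.
Proof. by apply/malgP => k; rewrite mcoeffZ !mcoeffU mulrnAr. Qed.
Lemma kmulU (K : monomType) (T : comNzRingType) (a b : T) (M N : K) :
  << a *g M >> * << b *g N >> = << a * b *g mmul M N >> :> {malg T[K]}.
Proof. by rewrite malgM_def fgmulUU. Qed.

Section G.
Variables (I : choiceType) (T : comNzRingType).
Local Notation P := {malg T[cmonom I]}.
Implicit Types (p q g : P) (u v w : I) (M N : cmonom I).

Lemma gscaleU (c a : T) M : c *: << a *g M >> = << c * a *g M >> :> P.
Proof. exact: kscaleU. Qed.

Lemma gmulU (a b : T) M N :
  << a *g M >> * << b *g N >> = << a * b *g mmul M N >> :> P.
Proof. exact: kmulU. Qed.

Definition gpdF u M (c : T) : P := << c * (M u)%:R *g divcm M (ucm u) >>.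
Definition gpd u p := sF (gpdF u) p.

Lemma gpdF0 u M : gpdF u M 0 = 0.
Proof. by rewrite /gpdF mul0r monalgU0. Qed.
Lemma gpdFD u M : {morph gpdF u M : x y / x + y}.
Proof. by move=> x y; rewrite /gpdF mulrDl monalgUD. Qed.
Lemma gpdD u p q : gpd u (p + q) = gpd u p + gpd u q.
Proof. by rewrite /gpd sFD //; [apply: gpdF0|apply: gpdFD]. Qed.
Lemma gpd0 u : gpd u 0 = 0.
Proof. by rewrite /gpd sF0. Qed.
Lemma gpd_sum u (J : Type) (r : seq J) (Pr : pred J) (E : J -> P) :
  gpd u (\sum_(i <- r | Pr i) E i) = \sum_(i <- r | Pr i) gpd u (E i).
Proof. exact: (big_morph _ (gpdD u) (gpd0 u)). Qed.
Lemma gpdU u c M : gpd u << c *g M >> = gpdF u M c.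
Proof. by rewrite /gpd sFU //; apply: gpdF0. Qed.
Lemma gpdZ u c p : gpd u (c *: p) = c *: gpd u p.
Proof.
rewrite /gpd (sFw (@gpdF0 u) (msuppZ_le c p)) /sF scaler_sumr.
by apply: eq_bigr => M _; rewrite /gpdF mcoeffZ gscaleU mulrA.
Qed.

Definition gdmon (dl : I -> I) M : P :=
  \sum_(v <- enum_fset (finsupp (cmonom_val M)))
     << (M v)%:R *g divcm M (ucm v) >> * << (1 : T) *g ucm (dl v) >>.
Definition gdF (d : T -> T) (dl : I -> I) M (c : T) : P :=
  << d c *g M >> + c *: gdmon dl M.
Definition gdext d dl p := sF (gdF d dl) p.

Lemma sum_if (A : {fset I}) w (Z : P) :
  \sum_(v <- A) (if v == w then Z else 0) = if w \in A then Z else 0.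
Proof.
case: ifP => wA.
  rewrite (big_fsetD1 w) //= eqxx big1_fset ?addr0 // => v.
  by rewrite in_fsetD1 => /andP[/negbTE -> _].
by rewrite big1_fset // => v vA _; case: (v =P w) => // E; move: wA; rewrite -E vA.
Qed.

Lemma gpd_dmon dl (dl_inj : injective dl) w M : M (dl w) = 0%N ->
  gpd (dl w) (gdmon dl M) = << (M w)%:R *g divcm M (ucm w) >>.
Proof.
move=> Mw; rewrite /gdmon gpd_sum.
rewrite (eq_bigr (fun v => if v == w then << (M w)%:R *g divcm M (ucm w) >> else 0)).
  rewrite sum_if; case: ifP => // wA.
  by move/negbT: wA; rewrite -cmE_neq0 negbK => /eqP ->; rewrite monalgU0.
move=> v _; rewrite gmulU gpdU /gpdF cmM divcmE !cmU Mw /= (inj_eq dl_inj).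
case: (v =P w) => [->|_]; last by rewrite mulr0 monalgU0.
have E : divcm (mmul (divcm M (ucm w)) (ucm (dl w))) (ucm (dl w)) = divcm M (ucm w).
  by apply/eqP/cmP => i; rewrite divcmE cmM divcmE !cmU addnK.
by rewrite E sub0n add0n /= mulr1 mulr1n mulr1.
Qed.

Lemma gpd_dext d dl (dl_inj : injective dl) w g :
  (forall M, M \in msupp g -> M (dl w) = 0%N) ->
  gpd (dl w) (gdext d dl g) = gpd w g.
Proof.
move=> H; rewrite /gdext /sF gpd_sum [RHS]/gpd /sF; apply: eq_big_seq => M HM.
rewrite /gdF gpdD gpdU gpdZ gpd_dmon ?H // /gpdF H // mulr0 monalgU0 add0r.
by rewrite gscaleU.
Qed.

Definition goodP (Q : pred I) p :=
  forall M, M \in msupp p -> forall u, M u != 0%N -> Q u.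

Lemma good0 (Q : pred I) : goodP Q 0.
Proof. by move=> M; rewrite msupp0. Qed.

Lemma goodD (Q : pred I) p q : goodP Q p -> goodP Q q -> goodP Q (p + q).
Proof.
move=> Hp Hq M /(fsubsetP (msuppD_le p q)); rewrite in_fsetU => /orP[/Hp|/Hq] //.
Qed.

Lemma good_sum (Q : pred I) (J : eqType) (r : seq J) (E : J -> P) :
  (forall i, i \in r -> goodP Q (E i)) -> goodP Q (\sum_(i <- r) E i).
Proof.
move=> H; rewrite big_seq; apply: (big_ind (goodP Q)) => //; first exact: good0.
exact: goodD.
Qed.

Lemma goodU (Q : pred I) c M : (forall u, M u != 0%N -> Q u) -> goodP Q << c *g M >>.
Proof. by move=> H N /(fsubsetP msuppU_le); rewrite inE => /eqP ->. Qed.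

Lemma goodZ (Q : pred I) c p : goodP Q p -> goodP Q (c *: p).
Proof. by move=> H M /(fsubsetP (msuppZ_le c p)) /H. Qed.

Lemma good_dext (Q1 Q2 : pred I) d dl g : goodP Q1 g ->
  (forall u, Q1 u -> Q2 u) -> (forall u, Q1 u -> Q2 (dl u)) ->
  goodP Q2 (gdext d dl g).
Proof.
move=> Hg H12 Hdl; apply: good_sum => M HM; apply: goodD.
  by apply: goodU => u Hu; apply/H12/(Hg M HM).
apply/goodZ/good_sum => v Hv; rewrite gmulU; apply: goodU => u.
rewrite cmM divcmE; case Hb: (ucm (dl v) u) => [|k]; last first.
  move: Hb; rewrite cmU; case: eqP => // <- _ _.
  by apply/Hdl/(Hg M HM); rewrite cmE_neq0.
rewrite addn0 => Hu; apply/H12/(Hg M HM).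
by apply: contra Hu => /eqP ->.
Qed.

End G.



Lemma der0 (T : comNzRingType) (D : T -> T) : is_derivation D -> D 0 = 0.
Proof.
move=> [Dadd _]; have h := Dadd 0 0; rewrite addr0 in h.
by apply/esym/(addrI (D 0)); rewrite addr0 -h.
Qed.

Section Inv.
Variables (n m : nat) (T : comNzRingType) (d : 'I_m -> T -> T).
Implicit Types (p q : dpoly n m T) (u v w : dvar n m).

Lemma ord_delta k u : ord (delta_var k u) = (ord u).+1.
Proof.
rewrite /ord /delta_var /theta_var /=.
rewrite (eq_bigr (fun j => (nat_of_bool (j == k)) + u.2 j)%N); last by move=> j _; rewrite !ffunE.
rewrite big_split /= (bigD1 k) //= eqxx big1 // => j /negbTE ->; by [].
Qed.

Lemma delta_inj k : injective (@delta_var n m k).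
Proof.
move=> [a1 b1] [a2 b2] [-> /ffunP H]; congr (_, _); apply/ffunP => j.
by move: (H j); rewrite !ffunE /= => /addnI.
Qed.

Definition ordle o : pred (dvar n m) := fun u => (ord u <= o)%N.

Definition Inv (s q : dpoly n m T) :=
  exists w, pderiv w q = s /\ goodP (ordle (ord w)) q.

Lemma Inv_dext s k q : Inv s q -> Inv s (dext d k q).
Proof.
move=> [w [Hp Hg]]; exists (delta_var k w); split.
  rewrite -Hp; change (gpd (delta_var k w) (gdext (d k) (delta_var k) q) = gpd w q).
  apply: gpd_dext; first exact: delta_inj.
  move=> M HM; case E: (M (delta_var k w)) => [//|j].
  have := Hg M HM (delta_var k w); rewrite E /ordle ord_delta ltnn => H.
  by have := H isT.
apply: (good_dext Hg) => u; rewrite /ordle ord_delta => H.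
  exact: leqW.
by rewrite ord_delta.
Qed.

Lemma Inv_theta s th q : Inv s q -> Inv s (theta d th q).
Proof.
move=> H; rewrite /theta; elim: (enum 'I_m) => [|k ks IH] //=.
move: IH; elim: (th k) => [|j IHj] //= Hx.
by apply: Inv_dext; apply: IHj.
Qed.

End Inv.



Section KMap.
Variables (K : monomType) (R S : comNzRingType) (phi : {rmorphism R -> S}).
Definition kmp (p : {malg R[K]}) : {malg S[K]} := \sum_(M <- msupp p) << phi p@_M *g M >>.
Local Notation mp := kmp.
Implicit Types (p q : {malg R[K]}).

Lemma kmp0 : mp 0 = 0.
Proof. by rewrite /kmp msupp0 big_seq_fset0. Qed.
Lemma kmpU c M : mp << c *g M >> = << phi c *g M >>.
Proof.
rewrite /kmp; rewrite (big_fset_incl _ msuppU_le); last first.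
  by move=> x _ /mcoeff_outdom ->; rewrite rmorph0 monalgU0.
by rewrite big_seq_fset1 mcoeffUU.
Qed.
Lemma kmpE (d : {fset K}) p : msupp p `<=` d -> mp p = \sum_(M <- d) << phi p@_M *g M >>.
Proof.
by move=> le; apply: big_fset_incl => // x _ /mcoeff_outdom ->; rewrite rmorph0 monalgU0.
Qed.
Lemma kmpD p q : mp (p + q) = mp p + mp q.
Proof.
rewrite (@kmpE (msupp p `|` msupp q)) ?msuppD_le //.
rewrite (@kmpE (msupp p `|` msupp q) p) ?fsubsetUl //.
rewrite (@kmpE (msupp p `|` msupp q) q) ?fsubsetUr //.
by rewrite -big_split; apply: eq_bigr => k _; rewrite mcoeffD rmorphD monalgUD.
Qed.
Lemma kmp_sum (J : Type) (r : seq J) (E : J -> {malg R[K]}) :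
  mp (\sum_(i <- r) E i) = \sum_(i <- r) mp (E i).
Proof. exact: (big_morph mp kmpD kmp0). Qed.
Lemma kmp_coef p M : (mp p)@_M = phi p@_M.
Proof.
rewrite {2}(monalgE p) {1}(monalgE p) kmp_sum raddf_sum /= raddf_sum rmorph_sum /=.
by apply: eq_bigr => k _; rewrite kmpU !mcoeffU rmorphMn.
Qed.
Lemma kmp_supp p : msupp (mp p) `<=` msupp p.
Proof.
apply/fsubsetP => k; rewrite -!mcoeff_neq0 kmp_coef.
by apply: contra => /eqP ->; rewrite rmorph0.
Qed.
Lemma kmpM p q : mp (p * q) = mp p * mp q.
Proof.
apply/malgP => k; rewrite kmp_coef mcoeffMl (mcoeffMlw _ (kmp_supp p) (kmp_supp q)).
rewrite rmorph_sum; apply: eq_bigr => k1 _; rewrite rmorph_sum; apply: eq_bigr => k2 _.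
by rewrite rmorphMn rmorphM !kmp_coef.
Qed.
Lemma kmpZ c p : mp (c *: p) = phi c *: mp p.
Proof. by rewrite -!mul_malgC kmpM kmpU. Qed.

Lemma kmp_sumnUU (J : Type) (s : seq J) (a : J -> nat) (X Y : J -> K) :
  mp (\sum_(v <- s) << (a v)%:R *g X v >> * << (1 : R) *g Y v >>) =
  \sum_(v <- s) << (a v)%:R *g X v >> * << (1 : S) *g Y v >>.
Proof.
by rewrite kmp_sum; apply: eq_bigr => v _; rewrite kmpM !kmpU rmorph_nat rmorph1.
Qed.

Lemma kmp_dext (dR : R -> R) (dS : S -> S) (GR : K -> {malg R[K]}) (GS : K -> {malg S[K]}) p :
  dS 0 = 0 -> (forall a, phi (dR a) = dS (phi a)) -> (forall M, mp (GR M) = GS M) ->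
  mp (\sum_(M <- msupp p) (<< dR p@_M *g M >> + p@_M *: GR M)) =
  \sum_(M <- msupp (mp p)) (<< dS (mp p)@_M *g M >> + (mp p)@_M *: GS M).
Proof.
move=> dS0 comm HG; rewrite kmp_sum [RHS](big_fset_incl _ (kmp_supp p)); last first.
  by move=> x _ /mcoeff_outdom ->; rewrite dS0 monalgU0 scale0r addr0.
by apply: eq_bigr => M _; rewrite kmpD kmpU kmpZ HG kmp_coef comm.
Qed.
End KMap.

Section MapD.
Variables (n m : nat) (R S : comNzRingType) (phi : {rmorphism R -> S}).
Variables (dR : 'I_m -> R -> R) (dS : 'I_m -> S -> S).
Hypothesis dS0 : forall k, dS k 0 = 0.
Hypothesis comm : forall k (a : R), phi (dR k a) = dS k (phi a).
Local Notation mp := (@map_dpoly n m R S phi).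
Implicit Types (p q : dpoly n m R).

Lemma mp_dmon k (M : dmonom n m) : mp (dmon R k M) = dmon S k M.
Proof. exact: kmp_sumnUU. Qed.

Lemma mp_dext k p : mp (dext dR k p) = dext dS k (mp p).
Proof. apply: kmp_dext; [exact: dS0 | exact: comm | exact: mp_dmon]. Qed.

Lemma mp_theta th p : mp (theta dR th p) = theta dS th (mp p).
Proof.
rewrite /theta; elim: (enum 'I_m) => [|k ks IH] //=.
move: IH; elim: (th k) => [|j IHj] //= Hx.
by rewrite mp_dext IHj.
Qed.
End MapD.



Lemma prod0 (T : comNzRingType) (J : eqType) (r : seq J) (F : J -> T) i :
  i \in r -> F i = 0 -> \prod_(j <- r) F j = 0.
Proof. by move=> ir Fi; rewrite (big_rem i) //= Fi mul0r. Qed.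

Lemma mul_eq0l (T : pzSemiRingType) (a b : T) : a = 0 -> a * b = 0.
Proof. by move->; rewrite mul0r. Qed.
Lemma mul_eq0r (T : pzSemiRingType) (a b : T) : b = 0 -> a * b = 0.
Proof. by move->; rewrite mulr0. Qed.

Lemma sepE (n m : nat) (T : comNzRingType) (p : dpoly n m T) v :
  leader p = Some v -> separant p = pderiv v p.
Proof. by rewrite /separant => ->. Qed.

Section Main.
Variables (n m : nat) (R S : comNzRingType).
Variables (dR : 'I_m -> R -> R) (dS : 'I_m -> S -> S) (phi : {rmorphism R -> S}).
Hypothesis HR : diff_ring_str dR.
Hypothesis HS : diff_ring_str dS.
Hypothesis comm : forall k (a : R), phi (dR k a) = dS k (phi a).
Variable L : {fset dpoly n m R}.
Hypothesis cohL : coherent dR L.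
Hypothesis Hne : map_dpoly phi (H_of L) != 0.
Local Notation mp := (@map_dpoly n m R S phi).

Lemma dS0 k : dS k 0 = 0.
Proof. by case: HS => H _; exact: (der0 (H k)). Qed.

Lemma mpH : mp (H_of L) = \prod_(f <- enum_fset L) (mp (initial f) * mp (separant f)).
Proof. by rewrite /H_of mp_prod; apply: eq_bigr => f _; rewrite mpM. Qed.

Lemma nzIS f : f \in L -> mp (initial f) != 0 /\ mp (separant f) != 0.
Proof.
move=> fL; split; apply: contraNneq Hne => E; apply/eqP; rewrite mpH;
  (apply: (prod0 (i := f)); first exact: fL).
  exact: mul_eq0l E.
exact: mul_eq0r E.
Qed.

Lemma leadL f : f \in L -> exists v, leader f = Some v.
Proof.
case: cohL => H0 _ _ fL; case E: (leader f) => [v|]; first by exists v.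
by move: (H0 f fL); rewrite E.
Qed.

Lemma leadL_mp f : f \in L -> exists v, [/\ leader f = Some v,
  leader (mp f) = Some v, degv v (mp f) = degv v f,
  initial (mp f) = mp (initial f) & separant (mp f) = mp (separant f)].
Proof.
move=> fL; have [v lv] := leadL fL; have [HI HS'] := nzIS fL.
have [? ? ? ?] := lead_mp lv HI HS'; by exists v; split.
Qed.

Lemma mp_inj : {in L &, injective mp}.
Proof.
move=> f g fL gL E; apply/eqP; apply/negPn/negP => ne.
have [v [lf lf' df _ _]] := leadL_mp fL.
have [w [lg lg' dg _ _]] := leadL_mp gL.
have vw : v = w by move: lf'; rewrite E lg' => -[].
subst w.
case: cohL => _ H1 _; have [_ H2] := H1 f g v fL gL ne lf.
have := H2 (proj1 (leaderP lg)); rewrite -df E dg ltnn //.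
Qed.


Local Notation L' := [fset map_dpoly phi f | f in L].

Lemma mpT th f : mp (theta dR th f) = theta dS th (mp f).
Proof. exact: (mp_theta dS0 comm th f). Qed.

Lemma HL' : H_of L' = mp (H_of L).
Proof.
rewrite /H_of mp_prod big_imfset /=; last exact: mp_inj.
rewrite (perm_big (enum_fset L)); last first.
  by apply: uniq_perm; [exact: fset_uniq | exact: fset_uniq | by []].
apply: eq_big_seq => f fL.
have [v [_ _ _ EI ES]] := leadL_mp fL.
rewrite EI ES; exact: esym (mpM _ _ _).
Qed.

Lemma Lam_mp v q : Lambda_lt dR L v q -> Lambda_lt dS L' v (mp q).
Proof.
case=> f0 [th [f0L -> [w [lw wv]]]].
exists (mp f0), th; split.
- exact: in_imfset.
- exact: mpT.
have [v0 [_ l0 _ _ S0]] := leadL_mp f0L.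
have [_ HSn] := nzIS f0L.
have Iv : Inv (separant (mp f0)) (mp f0).
  exists v0; split; first exact: (esym (sepE l0)).
  move=> M HM u Hu; apply: rle_ord; apply: (proj2 (leaderP l0)); apply/appearsP.
  by exists M => //; move: Hu; case: (M u).
have [w1 [P1 _]] := Inv_theta dS th Iv.
have app : appears w1 (theta dS th (mp f0)).
  by apply: pderiv_appears; rewrite P1 S0.
case E: (leader (theta dS th (mp f0))) => [w'|]; last first.
  by move: (leader_None w1 E); rewrite app.
exists w'; split => //.
have := proj1 (leaderP E); rewrite -mpT => /appears_mp /(proj2 (leaderP lw)).
case/orP => [/eqP ->|H] //; exact: rank_trans H wv.
Qed.

Lemma ideal_mp v X : in_ideal (Lambda_lt dR L v) X -> in_ideal (Lambda_lt dS L' v) (mp X).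
Proof.
case=> r [Hr ->]; exists [seq (mp pr.1, mp pr.2) | pr <- r]; split.
  by move=> pr /mapP [pr0 H0 ->] /=; apply: Lam_mp; exact: Hr.
rewrite big_map mp_sum; apply: eq_bigr => pr _ /=; exact: mpM.
Qed.

Lemma cohL' : coherent dS L'.
Proof.
split.
- move=> f' /imfsetP [f fL ->]; have [v [_ l' _ _ _]] := leadL_mp fL.
  by rewrite l'.
- move=> f' g' vf /imfsetP [f fL ->] /imfsetP [g gL ->] ne lf'.
  have [v [lf l'f df _ _]] := leadL_mp fL.
  have vv : v = vf by move: lf'; rewrite l'f => -[].
  subst vf.
  have ne' : f != g by apply: contra ne => /eqP ->.
  case: cohL => _ H1 _; have [A B] := H1 f g v fL gL ne' lf.
  split.
    move=> th th1; apply: contra (A th th1); exact: (@appears_mp n m R S phi _ g).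
  move=> /appears_mp /B H; exact: leq_trans (leq_ltn_trans (degv_mp_le phi v g) H) (eq_leq (esym df)).
- move=> f' g' vf vg thf thg /imfsetP [f fL ->] /imfsetP [g gL ->] ne lf' lg' eqv minv.
  have [v [lf l'f _ _ Sf]] := leadL_mp fL.
  have [w [lg l'g _ _ Sg]] := leadL_mp gL.
  have vv : v = vf by move: lf'; rewrite l'f => -[].
  have ww : w = vg by move: lg'; rewrite l'g => -[].
  subst vf vg.
  have ne' : f != g by apply: contra ne => /eqP ->.
  case: cohL => _ _ H2; have [N HN] := H2 f g v w thf thg fL gL ne' lf lg eqv minv.
  exists N.
  have e1 : mp (H_of L ^+ N) = H_of L' ^+ N.
    exact: (etrans (mpX _ _ _) (f_equal (fun x => x ^+ N) (esym HL'))).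
  have e2 : mp (separant g * theta dR thf f) = separant (mp g) * theta dS thf (mp f).
    exact: (etrans (mpM _ _ _) (f_equal2 *%R (esym Sg) (mpT thf f))).
  have e3 : mp (separant f * theta dR thg g) = separant (mp f) * theta dS thg (mp g).
    exact: (etrans (mpM _ _ _) (f_equal2 *%R (esym Sf) (mpT thg g))).
  have e4 := etrans (mpB _ _ _) (f_equal2 (fun a b => a - b) e2 e3).
  have e5 := etrans (mpM _ _ _) (f_equal2 *%R e1 e4).
  exact: (eq_rect _ (in_ideal _) (ideal_mp HN) _ e5).
Qed.

End Main.


Unset Implicit Arguments.

Theorem lemma2p3 (n m : nat) (R S : comNzRingType)
  (dR : 'I_m -> R -> R) (dS : 'I_m -> S -> S) (phi : {rmorphism R -> S}) :
  diff_ring_str dR -> diff_ring_str dS ->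
  (forall k (a : R), phi (dR k a) = dS k (phi a)) ->
  forall L : {fset dpoly n m R},
  coherent dR L ->
  map_dpoly phi (H_of L) != 0 ->
  H_of [fset map_dpoly phi f | f in L] = map_dpoly phi (H_of L) /\
  coherent dS [fset map_dpoly phi f | f in L].
Proof.
move=> HR HS comm L cohL Hne; split.
  exact: (HL' cohL Hne).
exact: (cohL' HS comm cohL Hne).
Qed.
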